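(* Let $a\in\mathbb{R}^n$, $\mathcal{B}\subseteq\mathbb{R}^n$, and $\mathcal{M}=\{\mathrm{Sym}(ab^\top): b\in\mathcal{B}\}$. Then for every positive semidefinite $X\in\mathbb{S}^n_+$ of rank at least two, $\mathrm{range}(X)\cap\mathcal{N}(\mathcal{M})\neq\{0\}$. In particular, $\mathcal{S}(\mathcal{M})$ is rank-one generated.
   Context: $\mathbb{S}^n$ is the space of real symmetric $n\times n$ matrices with $\langle A,B\rangle=\mathrm{tr}(AB)$; $\mathbb{S}^n_+$ is the PSD cone; $\mathrm{Sym}(M)=(M+M^\top)/2$. For $\mathcal{M}\subseteq\mathbb{S}^n$: $\mathcal{S}(\mathcal{M})=\{X\in\mathbb{S}^n_+:\langle M,X\rangle\ge0\ \forall M\in\mathcal{M}\}$ and $\mathcal{N}(\mathcal{M})=\{x\in\mathbb{R}^n: x^\top Mx=0\ \forall M\in\mathcal{M}\}$. A closed convex cone $\mathcal{S}\subseteq\mathbb{S}^n_+$ is rank-one generated (ROG) if $\mathcal{S}=\mathrm{conv}(\mathcal{S}\cap\{xx^\top:x\in\mathbb{R}^n\})$. *)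

(* Defs.v *)
From HB Require Import structures.
From mathcomp Require Import all_boot all_order all_algebra.
From mathcomp Require Import boolp classical_sets.
Set Implicit Arguments. Unset Strict Implicit. Unset Printing Implicit Defensive.
Import Order.TTheory GRing.Theory Num.Theory.
Local Open Scope ring_scope.
Local Open Scope classical_set_scope.

Section Defs.
Variables (R : realFieldType) (n : nat).

Definition Sym (M : 'M[R]_n) : 'M[R]_n := 2^-1 *: (M + M^T).

Definition inner (A B : 'M[R]_n) : R := \tr (A *m B).

Definition qform (M : 'M[R]_n) (x : 'cV[R]_n) : R := (x^T *m M *m x) 0 0.

Definition psd (X : 'M[R]_n) : Prop :=
  X^T = X /\ forall x : 'cV[R]_n, 0 <= qform X x.

Definition Sset (M : set 'M[R]_n) : set 'M[R]_n :=
  [set X | psd X /\ forall A, M A -> 0 <= inner A X].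

Definition Nset (M : set 'M[R]_n) : set 'cV[R]_n :=
  [set x | forall A, M A -> qform A x = 0].

Definition colspan (X : 'M[R]_n) : set 'cV[R]_n :=
  [set x | exists y : 'cV[R]_n, x = X *m y].

Definition conv (S : set 'M[R]_n) : set 'M[R]_n :=
  [set X | exists (k : nat) (lam : 'I_k -> R) (P : 'I_k -> 'M[R]_n),
      (forall i, 0 <= lam i) /\ \sum_(i < k) lam i = 1 /\
      (forall i, S (P i)) /\ X = \sum_(i < k) lam i *: P i].

Definition rank_one_set : set 'M[R]_n :=
  [set X | exists x : 'cV[R]_n, X = x *m x^T].

Definition ROG (S : set 'M[R]_n) : Prop := S = conv (S `&` rank_one_set).

Definition Mset (a : 'cV[R]_n) (B : set 'cV[R]_n) : set 'M[R]_n :=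
  [set A | exists2 b, B b & A = Sym (a *m b^T)].

End Defs.

(* Main.v *)
Require Import Defs.
From HB Require Import structures.
From mathcomp Require Import all_boot all_order all_algebra.
From mathcomp Require Import boolp classical_sets.
From mathcomp Require Import ring lra.
Import Order.TTheory GRing.Theory Num.Theory.
Local Open Scope ring_scope.
Local Open Scope classical_set_scope.
Set Implicit Arguments. Unset Strict Implicit. Unset Printing Implicit Defensive.

Section Aux.
Variables (R : realFieldType) (n : nat).
Implicit Types (u v w x y e : 'cV[R]_n) (Y Z : 'M[R]_n).

Definition dot u w : R := (u^T *m w) 0 0.

Lemma dotE u w : dot u w = \sum_i u i 0 * w i 0.
Proof. by rewrite /dot !mxE; apply: eq_bigr => i _; rewrite mxE. Qed.

Lemma dotC u w : dot u w = dot w u.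
Proof. by rewrite !dotE; apply: eq_bigr => i _; rewrite mulrC. Qed.

Lemma dotDr u w1 w2 : dot u (w1 + w2) = dot u w1 + dot u w2.
Proof. by rewrite !dotE -big_split; apply: eq_bigr => i _; rewrite mxE mulrDr. Qed.

Lemma dotZr u c w : dot u (c *: w) = c * dot u w.
Proof. by rewrite !dotE mulr_sumr; apply: eq_bigr => i _; rewrite mxE mulrCA. Qed.

Lemma dotNr u w : dot u (- w) = - dot u w.
Proof. by rewrite -scaleN1r dotZr mulN1r. Qed.

Lemma dotBr u w1 w2 : dot u (w1 - w2) = dot u w1 - dot u w2.
Proof. by rewrite dotDr dotNr. Qed.

Lemma dot0r u : dot u 0 = 0.
Proof. by rewrite -(scale0r (0 : 'cV[R]_n)) dotZr mul0r. Qed.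

Lemma dotDl u1 u2 w : dot (u1 + u2) w = dot u1 w + dot u2 w.
Proof. by rewrite dotC dotDr !(dotC w). Qed.

Lemma dotZl c u w : dot (c *: u) w = c * dot u w.
Proof. by rewrite dotC dotZr dotC. Qed.

Lemma dotBl u1 u2 w : dot (u1 - u2) w = dot u1 w - dot u2 w.
Proof. by rewrite dotC dotBr !(dotC w). Qed.

Lemma dot_mul u (A : 'M[R]_n) w : dot u (A *m w) = dot (A^T *m u) w.
Proof. by rewrite /dot trmx_mul trmxK mulmxA. Qed.

Lemma dot_ge0 u : 0 <= dot u u.
Proof. by rewrite dotE; apply: sumr_ge0 => i _; rewrite -expr2 sqr_ge0. Qed.

Lemma dot_eq0 u : dot u u = 0 -> u = 0.
Proof.
rewrite dotE => /psumr_eq0P H; apply/matrixP => i j; rewrite ord1 mxE.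
have /eqP := H (fun k _ => (ltac:(by rewrite -expr2 sqr_ge0) : 0 <= u k 0 * u k 0)) i isT.
by rewrite mulf_eq0 orbb => /eqP.
Qed.

Lemma qformE Y x : qform Y x = dot x (Y *m x).
Proof. by rewrite /qform /dot mulmxA. Qed.

Lemma rank1_mul u w y : (u *m w^T) *m y = dot w y *: u.
Proof. by rewrite -mulmxA [w^T *m y]mx11_scalar mul_mx_scalar. Qed.


Lemma dot_mulT Y u w : Y^T = Y -> dot u (Y *m w) = dot (Y *m u) w.
Proof. by move=> hY; rewrite dot_mul hY. Qed.

Lemma psd_kernel Y e : psd Y -> qform Y e = 0 -> Y *m e = 0.
Proof.
move=> [hT hq] he; apply: dot_eq0.
set z := Y *m e; set p := dot z z; set q := qform Y z.
have hq0 : 0 <= q by apply: hq.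
pose t := - p / (q + 1).
have := hq (e + t *: z).
rewrite qformE mulmxDr -scalemxAr !(dotDl, dotDr, dotZl, dotZr) -!qformE he.
rewrite (dotC e (Y *m z)) -(dot_mulT _ _ hT) -/z -/p -/q.
have hp : 0 <= p by apply: dot_ge0.
have -> : 0 + t * p + (t * p + t * (t * q)) = - p ^+ 2 * (q + 2) / (q + 1) ^+ 2.
  by rewrite /t; field; rewrite gt_eqF // ltr_wpDl.
rewrite ler_pdivlMr ?exprn_gt0 ?ltr_wpDl // mul0r => h.
have : p ^+ 2 * (q + 2) <= 0 by rewrite -oppr_ge0 -mulNr.
rewrite pmulr_lle0 ?ltr_wpDl // => h2.
by apply/eqP; rewrite -sqrf_eq0 eq_le h2 sqr_ge0.
Qed.

Lemma mx_eq0_cols Y : (forall e, Y *m e = 0) -> Y = 0.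
Proof.
move=> H; apply/matrixP => i j.
have := congr1 (fun M : 'cV_n => M i 0) (H (delta_mx j 0)).
by rewrite -colE !mxE.
Qed.

Lemma psd_zero_or Y : psd Y -> Y = 0 \/ exists e, 0 < qform Y e.
Proof.
move=> hY; have [ex|nex] := pselect (exists e, 0 < qform Y e); first by right.
left; apply: mx_eq0_cols => e; apply: psd_kernel => //.
have := hY.2 e; rewrite le_eqVlt => /orP[/eqP <- //|h].
by exfalso; apply: nex; exists e.
Qed.


Lemma psd_rank1 v : psd (v *m v^T).
Proof.
split; first by rewrite trmx_mul trmxK.
by move=> x; rewrite qformE rank1_mul dotZr dotC -expr2 sqr_ge0.
Qed.

Lemma pivot Y e : psd Y -> 0 < qform Y e ->
  let v := Y *m e in let c := qform Y e in
  let Y' := Y - c^-1 *: (v *m v^T) in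
  [/\ psd Y', Y' *m e = 0, (\rank Y' < \rank Y)%N & Y = c^-1 *: (v *m v^T) + Y'].
Proof.
move=> [hT hq] hc v c Y'.
have hcv : dot v e = c by rewrite /c qformE dotC.
have hY'x x : Y' *m x = Y *m x - (c^-1 * dot v x) *: v.
  by rewrite /Y' mulmxBl -scalemxAl rank1_mul scalerA.
have hc0 : c != 0 by rewrite gt_eqF.
have hY'e : Y' *m e = 0.
  by rewrite hY'x hcv mulVf // scale1r subrr.
split => //.
- split.
  + by rewrite /Y' linearB /= linearZ /= trmx_mul trmxK hT.
  + move=> x; rewrite qformE hY'x dotBr dotZr -qformE.
    set p := dot v x.
    have := hq (x - (p / c) *: e).
    rewrite qformE mulmxBr -scalemxAr -/v !(dotBl, dotBr, dotZl, dotZr) -qformE -/c.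
    rewrite (dotC e (Y *m x)) -(dot_mulT _ _ hT) -/v -/p (dotC x v) -/p.
    rewrite (dotC e v) hcv.
    suff -> : qform Y x - p / c * p - p / c * (p - p / c * c) = qform Y x - c^-1 * p * p by [].
    by field.
- apply: rank_ltmx.
  + rewrite ltmxE; apply/andP; split.
    * have -> : Y' = (1%:M - c^-1 *: (v *m e^T)) *m Y.
        rewrite mulmxBl mul1mx -scalemxAl -mulmxA.
        have -> : e^T *m Y = v^T by rewrite /v trmx_mul hT.
        by [].
      exact: submxMl.
    * apply/negP => /submxP [D hD].
      have : v = 0 by rewrite /v hD -mulmxA hY'e mulmx0.
      move=> hv0; move: hc; rewrite qformE -/v hv0 dot0r ltxx //.
- by rewrite /Y' addrC subrK.
Qed.


Lemma tr11 (M : 'M[R]_1) : \tr M = M 0 0.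
Proof. by rewrite /mxtrace big_ord1. Qed.

Lemma Sym_mul a b x : Sym (a *m b^T) *m x = 2^-1 *: (dot b x *: a + dot a x *: b).
Proof. by rewrite /Sym -scalemxAl trmx_mul trmxK mulmxDl !rank1_mul. Qed.

Lemma inner_Sym a b Z : Z^T = Z -> inner (Sym (a *m b^T)) Z = dot b (Z *m a).
Proof.
move=> hZ; rewrite /inner /Sym -scalemxAl mxtraceZ trmx_mul trmxK mulmxDl mxtraceD.
rewrite -!mulmxA (mxtrace_mulC a) (mxtrace_mulC b) !tr11.
have e1 : (b^T *m Z *m a) 0 0 = dot b (Z *m a) by rewrite /dot mulmxA.
have e2 : (a^T *m Z *m b) 0 0 = dot b (Z *m a).
  have -> : (a^T *m Z *m b) 0 0 = dot a (Z *m b) by rewrite /dot mulmxA.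
  by rewrite dot_mulT // dotC.
by rewrite e1 e2; field.
Qed.

Section SS.
Variable M : set 'M[R]_n.

Lemma Sset0 : Sset M 0.
Proof.
split; first split; first by rewrite trmx0.
- by move=> x; rewrite qformE mul0mx dot0r.
- by move=> A _; rewrite /inner mulmx0 raddf0.
Qed.

Lemma Sset_add X1 X2 : Sset M X1 -> Sset M X2 -> Sset M (X1 + X2).
Proof.
move=> [[h1 q1] i1] [[h2 q2] i2]; split; first split.
- by rewrite linearD /= h1 h2.
- by move=> x; rewrite qformE mulmxDl dotDr -!qformE addr_ge0.
- by move=> A hA; rewrite /inner mulmxDr mxtraceD addr_ge0 ?i1 ?i2.
Qed.

Lemma Sset_scale c X : 0 <= c -> Sset M X -> Sset M (c *: X).
Proof.
move=> hc [[h1 q1] i1]; split; first split.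
- by rewrite linearZ /= h1.
- by move=> x; rewrite qformE -scalemxAl dotZr -qformE mulr_ge0.
- by move=> A hA; rewrite /inner -scalemxAr mxtraceZ mulr_ge0 ?i1.
Qed.
End SS.


Definition Cone (S : set 'M[R]_n) (X : 'M[R]_n) :=
  exists k (lam : 'I_k -> R) (vs : 'I_k -> 'cV[R]_n),
    (forall i, 0 <= lam i) /\ (forall i, S (vs i *m (vs i)^T)) /\
    X = \sum_(i < k) lam i *: (vs i *m (vs i)^T).

Definition ext T k (f : 'I_k -> T) (z : T) : 'I_k.+1 -> T :=
  fun i => if unlift ord0 i is Some j then f j else z.

Lemma ext0 T k (f : 'I_k -> T) (z : T) : ext f z ord0 = z.
Proof. by rewrite /ext unlift_none. Qed.

Lemma extS T k (f : 'I_k -> T) (z : T) j : ext f z (lift ord0 j) = f j.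
Proof. by rewrite /ext liftK. Qed.

Lemma ext_all T k (f : 'I_k -> T) (z : T) (P : T -> Prop) :
  P z -> (forall j, P (f j)) -> forall i, P (ext f z i).
Proof. by move=> hx hf i; case: (unliftP ord0 i) => [j ->|->]; rewrite ?extS ?ext0. Qed.

Lemma cone0 S : Cone S 0.
Proof.
exists 0%N, (fun _ => 0), (fun _ => 0); split; first by case.
by split; [case | rewrite big_ord0].
Qed.

Lemma cone_cons S c v Y : 0 <= c -> S (v *m v^T) -> Cone S Y ->
  Cone S (c *: (v *m v^T) + Y).
Proof.
move=> hc hv [k [lam [vs [h1 [h2 ->]]]]].
exists k.+1, (ext lam c), (ext vs v); split; first exact: (ext_all (P := fun t : R => 0 <= t)).
split; first exact: (ext_all (P := fun w => S (w *m w^T))).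
by rewrite big_ord_recl !ext0; congr (_ + _); apply: eq_bigr => j _; rewrite !extS.
Qed.


Section Main.
Variables (a : 'cV[R]_n) (B : set 'cV[R]_n).
Local Notation M := (Mset a B).

Lemma step Y e : Sset M Y -> 0 < qform Y e -> (e = a \/ Y *m a = 0) ->
  let v := Y *m e in let c := qform Y e in
  let Y' := Y - c^-1 *: (v *m v^T) in
  [/\ Sset M Y', Sset M (v *m v^T), (\rank Y' < \rank Y)%N & Y = c^-1 *: (v *m v^T) + Y'].
Proof.
move=> [hpsd hin] hc hcase v c Y'.
have [hpsd' hY'e hrk hdec] := pivot hpsd hc.
have hva : Y' *m a = 0.
  case: hcase => [<- //|hYa].
  rewrite /Y' mulmxBl -scalemxAl rank1_mul hYa.
  have -> : dot v a = 0 by rewrite /v -dot_mulT ?hYa ?dot0r //; case: hpsd.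
  by rewrite scale0r scaler0 subr0.
split => //.
- split => // A [b hb ->]; rewrite inner_Sym; last by case: hpsd'.
  by rewrite hva dot0r.
- split; first exact: psd_rank1.
  move=> A [b hb ->]; rewrite inner_Sym; last by case: (psd_rank1 v).
  rewrite rank1_mul dotZr.
  case: hcase => [ea|hYa].
  + apply: mulr_ge0.
    * by rewrite /v ea dotC -qformE -ea ltW.
    * have := hin _ (ex_intro2 _ _ b hb erefl); rewrite inner_Sym; last by case: hpsd.
      by rewrite /v ea.
  + have -> : dot v a = 0 by rewrite /v -dot_mulT ?hYa ?dot0r //; case: hpsd.
    by rewrite mul0r.
Qed.

Lemma cone_all r : forall Y, (\rank Y <= r)%N -> Sset M Y -> Cone (Sset M) Y.
Proof.
elim: r => [|r IH] Y hr hS.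
  move: hr; rewrite leqn0 mxrank_eq0 => /eqP ->; exact: cone0.
have [->|[e0 he0]] := psd_zero_or hS.1; first exact: cone0.
have [e [he hcase]] : exists e, 0 < qform Y e /\ (e = a \/ Y *m a = 0).
  have [ha|ha] := pselect (0 < qform Y a); first by exists a; split => //; left.
  exists e0; split => //; right; apply: psd_kernel; first exact: hS.1.
  have := hS.1.2 a; rewrite le_eqVlt => /orP[/eqP <- //|h]; by exfalso.
have [hS' hSv hrk ->] := step hS he hcase.
apply: cone_cons => //; first by rewrite invr_ge0 ltW.
apply: IH => //; rewrite -ltnS; exact: leq_trans hrk hr.
Qed.


Lemma cone_to_conv X : Cone (Sset M) X -> conv (Sset M `&` @rank_one_set R n) X.
Proof.
move=> [k [lam [vs [h1 [h2 ->]]]]].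
set s := \sum_(i < k) lam i.
have hs : 0 <= s by apply: sumr_ge0.
set T := (s + 1) ^+ 2.
have hT : 0 < T by rewrite /T exprn_gt0 // ltr_wpDl.
have hT0 : T != 0 by rewrite gt_eqF.
have hsc v : ((s + 1) *: v) *m ((s + 1) *: v)^T = T *: (v *m v^T).
  by rewrite linearZ /= -scalemxAl -scalemxAr scalerA.
exists k.+1, (ext (fun i => lam i / T) (1 - s / T)),
  (ext (fun i => ((s + 1) *: vs i) *m ((s + 1) *: vs i)^T) 0).
split.
  apply: (ext_all (P := fun t : R => 0 <= t)).
  - rewrite subr_ge0 ler_pdivrMr // mul1r /T; nra.
  - by move=> j; rewrite divr_ge0 // ltW.
split.
  rewrite big_ord_recl ext0.
  under eq_bigr do rewrite extS.
  by rewrite -mulr_suml -/s subrK.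
split.
  apply: (ext_all (P := fun P => (Sset M `&` @rank_one_set R n) P)).
  - by split; [exact: Sset0 | exists 0; rewrite mul0mx].
  - move=> j; split; last by exists ((s + 1) *: vs j).
    by rewrite hsc; apply: Sset_scale => //; apply: ltW.
rewrite big_ord_recl !ext0 scaler0 add0r; apply: eq_bigr => j _.
by rewrite !extS hsc scalerA divfK.
Qed.

Lemma conv_sub X : conv (Sset M `&` @rank_one_set R n) X -> Sset M X.
Proof.
move=> [k [lam [P [h1 [_ [h3 ->]]]]]].
apply: (big_ind (Sset M)); [exact: Sset0 | exact: Sset_add |].
by move=> i _; apply: Sset_scale => //; case: (h3 i).
Qed.

Lemma part1 X : (2 <= \rank X)%N -> colspan X `&` Nset M <> [set 0].
Proof.
move=> hr H.
set r := a^T *m X.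
have hy y : r *m y = 0 -> X *m y = 0.
  move=> hry.
  have : ([set 0] : set 'cV[R]_n) (X *m y); last by [].
  rewrite -H; split; first by exists y.
  have ha : dot a (X *m y) = 0 by rewrite /dot mulmxA -/r hry mxE.
  move=> A [b hb ->]; rewrite qformE Sym_mul dotZr dotDr !dotZr.
  by rewrite (dotC (X *m y) a) ha !(mulr0, mul0r, addr0).
have hC : X *m cokermx r = 0.
  apply/matrixP => i j.
  have hcol : r *m col j (cokermx r) = 0 by rewrite colE mulmxA mulmx_coker mul0mx.
  have h : col j (X *m cokermx r) = 0 by rewrite colE -mulmxA -colE hy.
  move: (congr1 (fun m : 'cV[R]_n => m i 0) h); rewrite !mxE; exact.
have hsub : (X <= r)%MS by rewrite submxE hC.
have := leq_trans hr (leq_trans (mxrankS hsub) (rank_leq_row r)).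
by [].
Qed.

End Main.

End Aux.

Theorem theorem3p4 (R : realFieldType) (n : nat) (a : 'cV[R]_n)
    (B : set 'cV[R]_n) :
  (forall X : 'M[R]_n, psd X -> (2 <= \rank X)%N ->
     colspan X `&` Nset (Mset a B) <> [set 0]) /\
  ROG (Sset (Mset a B)).
Proof.
split; first by move=> X _; apply: part1.
apply/seteqP; split => X hX.
- apply: cone_to_conv; apply: (@cone_all _ _ _ _ n) => //; exact: rank_leq_row.
- exact: conv_sub.
Qed.
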